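(* Let $X$ be a real Hilbert space and $I$ either $[0,T]$ ($T>0$) or $[0,+\infty)$. Assume: $K\subset X$ is a nonempty closed convex cone; $A:X\to X$ satisfies $(Au-Av,u-v)_X\ge m_A\|u-v\|_X^2$ and $\|Au-Av\|_X\le L_A\|u-v\|_X$ for all $u,v\in X$, with $m_A,L_A>0$; $f\in C(I;X)$; $\mathcal{S}:C(I;X)\to C(I;X)$ is a history-dependent operator; $j:K\to\mathbb{R}$ is a convex, positively homogeneous, Lipschitz continuous function. Then there exists a unique function $u\in C(I;K)$ such that $$-u(t)\in \mathrm{N}_{C(t)}\big(Au(t)+\mathcal{S}u(t)\big)\quad\forall\,t\in I.$$
   Context: $\mathcal{S}$ is history-dependent if for every compact $\mathcal J\subset I$ there is $L_{\mathcal J}>0$ with $\|\mathcal{S}u_1(t)-\mathcal{S}u_2(t)\|_X\le L_{\mathcal J}\int_0^t\|u_1(s)-u_2(s)\|_X ds$ for all $u_1,u_2\in C(I;X)$, $t\in\mathcal J$. Define $J:X\to(-\infty,+\infty]$ by $J(v)=j(v)$ if $v\in K$, $J(v)=+\infty$ otherwise; $C=\{\xi\in X:J(v)\ge(\xi,v)_X\ \forall v\in X\}$ and $C(t)=f(t)-C$ for $t\in I$. For a nonempty closed convex $D\subset X$, $\mathrm{N}_D(x)=\{\xi:(\xi,w-x)_X\le0\ \forall w\in D\}$ if $x\in D$, $\emptyset$ otherwise. *)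

(* Defs.v *)
From Stdlib Require Import Reals Rtopology ClassicalEpsilon.
From Coquelicot Require Import Coquelicot.
Open Scope R_scope.

Section Defs.
Context {X : CompleteNormedModule R_AbsRing}.

(* ip is an inner product on X inducing the norm of X; X being complete,
   (X, ip) is a real Hilbert space. *)
Definition is_inner_product (ip : X -> X -> R) : Prop :=
  (forall x y, ip x y = ip y x) /\
  (forall x y z, ip (plus x y) z = ip x z + ip y z) /\
  (forall (a : R) x y, ip (scal a x) y = a * ip x y) /\
  (forall x, 0 <= ip x x) /\
  (forall x, norm x = sqrt (ip x x)).

(* The time interval I = [0,T] (T real, T > 0) or [0,+oo) (T = p_infty). *)
Definition time_interval (T : Rbar) (t : R) : Prop := 0 <= t /\ Rbar_le t T.

Definition cont_on (I : R -> Prop) (u : R -> X) : Prop :=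
  forall t, I t -> filterlim u (within I (locally t)) (locally (u t)).

Definition history_dependent (I : R -> Prop) (S : (R -> X) -> (R -> X)) : Prop :=
  forall J : R -> Prop, (forall t, J t -> I t) -> Rtopology.compact J ->
  exists L : R, 0 < L /\
    forall u1 u2, cont_on I u1 -> cont_on I u2 ->
    forall t, J t ->
      norm (minus (S u1 t) (S u2 t)) <= L * RInt (fun s => norm (minus (u1 s) (u2 s))) 0 t.

Definition closed_convex_cone (K : X -> Prop) : Prop :=
  (exists x, K x) /\ closed K /\
  (forall u v (l : R), K u -> K v -> 0 <= l <= 1 -> K (plus (scal l u) (scal (1 - l) v))) /\
  (forall u (l : R), K u -> 0 <= l -> K (scal l u)).

Definition j_hyp (K : X -> Prop) (j : X -> R) : Prop :=
  (forall u v (l : R), K u -> K v -> 0 <= l <= 1 ->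
     j (plus (scal l u) (scal (1 - l) v)) <= l * j u + (1 - l) * j v) /\
  (forall u (l : R), K u -> 0 < l -> j (scal l u) = l * j u) /\
  (exists Lj : R, 0 <= Lj /\ forall u v, K u -> K v -> Rabs (j u - j v) <= Lj * norm (minus u v)).

Definition Jext (K : X -> Prop) (j : X -> R) (v : X) : Rbar :=
  if excluded_middle_informative (K v) then Finite (j v) else p_infty.

Definition Cset (ip : X -> X -> R) (K : X -> Prop) (j : X -> R) (xi : X) : Prop :=
  forall v, Rbar_le (Finite (ip xi v)) (Jext K j v).

Definition Ct (ip : X -> X -> R) (K : X -> Prop) (j : X -> R) (f : R -> X) (t : R) (xi : X) : Prop :=
  exists c, Cset ip K j c /\ xi = minus (f t) c.

Definition normal_cone (ip : X -> X -> R) (D : X -> Prop) (x xi : X) : Prop :=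
  D x /\ forall w, D w -> ip xi (minus w x) <= 0.

End Defs.

(* Main.v *)
Require Import Defs.
From Stdlib Require Import Reals Rtopology.
From Coquelicot Require Import Coquelicot.
From Stdlib Require Import Lra Psatz ClassicalEpsilon.
From Stdlib Require Import ssreflect.
Open Scope R_scope.


Definition contw (b : R) (h : R -> R) : Prop :=
  forall t, 0 <= t <= b -> forall eps, 0 < eps -> exists del, 0 < del /\
    forall s, 0 <= s <= b -> Rabs (s - t) < del -> Rabs (h s - h t) < eps.

Definition cl (b s : R) := Rmax 0 (Rmin s b).

Lemma cl_in b s : 0 <= b -> 0 <= cl b s <= b.
Proof. rewrite /cl /Rmax /Rmin. intros; repeat destruct Rle_dec; lra. Qed.
Lemma cl_id b s : 0 <= s <= b -> cl b s = s.
Proof. rewrite /cl /Rmax /Rmin. intros; repeat destruct Rle_dec; lra. Qed.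
Lemma cl_lip b s t : 0 <= b -> Rabs (cl b s - cl b t) <= Rabs (s - t).
Proof. rewrite /cl /Rmax /Rmin. intros; repeat destruct Rle_dec; split_Rabs; lra. Qed.

Lemma ball_R (x y e : R) : ball x e y <-> Rabs (y - x) < e.
Proof. rewrite /ball /= /AbsRing_ball /abs /minus /plus /opp /=. tauto. Qed.

Lemma contw_cl_pt b h x : 0 <= b -> contw b h -> continuity_pt (fun s => h (cl b s)) x.
Proof.
  intros Hb Hc. apply continuity_pt_locally. intros eps.
  destruct (Hc (cl b x) (cl_in b x Hb) eps (cond_pos eps)) as [del [Hd Hdel]].
  exists (mkposreal _ Hd). intros y Hy. apply ball_R in Hy. simpl in Hy.
  apply Hdel. apply cl_in; auto.
  eapply Rle_lt_trans. apply cl_lip; auto. auto.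
Qed.

Lemma contw_bounded b h : 0 <= b -> contw b h -> exists M, 0 <= M /\ forall s, 0 <= s <= b -> h s <= M.
Proof.
  intros Hb Hc.
  destruct (continuity_ab_maj (fun s => h (cl b s)) 0 b Hb) as [Mx [HM _]].
  { intros c _. apply contw_cl_pt; auto. }
  exists (Rmax 0 (h (cl b Mx))). split. apply Rmax_l.
  intros s Hs. have := HM s Hs. rewrite cl_id //. have := Rmax_r 0 (h (cl b Mx)). lra.
Qed.

Lemma contw_int b h : 0 <= b -> contw b h -> forall s, 0 <= s <= b -> ex_RInt h 0 s.
Proof.
  intros Hb Hc s Hs.
  apply (ex_RInt_ext (fun s => h (cl b s))).
  { have E1 : Rmin 0 s = 0 by apply Rmin_left; lra.
    have E2 : Rmax 0 s = s by apply Rmax_right; lra.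
    rewrite E1 E2. intros x Hx. rewrite cl_id //; lra. }
  apply (@ex_RInt_continuous R_CompleteNormedModule). intros z _. apply continuity_pt_filterlim. apply contw_cl_pt; auto.
Qed.

Lemma exp_int (K be s : R) : 0 < be -> RInt (fun r => K * exp (be * r)) 0 s = K * (exp (be * s) - 1) / be.
Proof.
  intros Hbe. apply is_RInt_unique.
  have E : K * (exp (be * s) - 1) / be = minus (K * exp (be * s) / be) (K * exp (be * 0) / be).
  { rewrite /minus /plus /opp /=. rewrite Rmult_0_r exp_0. field. lra. }
  rewrite E. apply (is_RInt_derive (fun r => K * exp (be * r) / be)).
  - intros x _. auto_derive. auto. field. lra.
  - intros x _. apply continuity_pt_filterlim. apply continuity_pt_mult. apply continuity_pt_const. intros ? ?; auto.
    apply (continuity_pt_comp (fun r => be * r) exp). apply continuity_pt_mult. apply continuity_pt_const. intros ? ?; auto.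
    apply derivable_continuous_pt. apply derivable_pt_id. apply derivable_continuous_pt. apply derivable_pt_exp.
Qed.

Lemma exp_iter (d : nat -> R -> R) b c M : 0 <= c -> 0 <= M ->
  (forall n s, 0 <= s <= b -> ex_RInt (d n) 0 s) ->
  (forall s, 0 <= s <= b -> d O s <= M) ->
  (forall n s, 0 <= s <= b -> d (S n) s <= c * RInt (d n) 0 s) ->
  forall n s, 0 <= s <= b -> d n s <= M * exp ((2 * c + 1) * s) * (/ 2) ^ n.
Proof.
  intros Hc HM Hint H0 HS n. induction n as [|n IH]; intros s Hs.
  - simpl. have := H0 s Hs. have : 1 <= exp ((2 * c + 1) * s).
    { have := exp_ineq1_le ((2*c+1)*s). have : 0 <= (2*c+1)*s by nra. lra. }
    nra.
  - eapply Rle_trans. apply HS; auto.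
    have Hbe : 0 < 2 * c + 1 by lra.
    have Hle : RInt (d n) 0 s <= RInt (fun r => (M * (/ 2) ^ n) * exp ((2 * c + 1) * r)) 0 s.
    { apply RInt_le. lra. apply Hint; auto.
      eexists. apply (RInt_correct (fun r => (M * (/ 2) ^ n) * exp ((2 * c + 1) * r))).
      apply (@ex_RInt_continuous R_CompleteNormedModule). intros z _. apply continuity_pt_filterlim.
      apply continuity_pt_mult. apply continuity_pt_const. intros ? ?; auto.
      apply (continuity_pt_comp (fun r => (2 * c + 1) * r) exp). apply continuity_pt_mult. apply continuity_pt_const. intros ? ?; auto.
      apply derivable_continuous_pt. apply derivable_pt_id. apply derivable_continuous_pt. apply derivable_pt_exp.
      intros x Hx. have := IH x ltac:(lra). lra. }
    rewrite exp_int // in Hle.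
    have Hp : 0 <= (/ 2) ^ n by apply pow_le; lra.
    have HK : 0 <= M * (/ 2) ^ n by apply Rmult_le_pos.
    have HE : 1 <= exp ((2 * c + 1) * s).
    { have := exp_ineq1_le ((2*c+1)*s). have : 0 <= (2*c+1)*s by nra. lra. }
    set E := exp ((2 * c + 1) * s) in Hle HE *.
    set K := M * (/ 2) ^ n in Hle HK *.
    have -> : M * E * (/ 2) ^ S n = K * E / 2 by rewrite /K /=; field.
    have Hr : c * (K * (E - 1) / (2 * c + 1)) <= K * E / 2.
    { apply (Rmult_le_reg_r (2 * c + 1)); auto.
      have -> : c * (K * (E - 1) / (2 * c + 1)) * (2 * c + 1) = c * K * (E - 1) by field; lra.
      nra. }
    have := Rmult_le_compat_l c _ _ Hc Hle. lra.
Qed.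

Lemma my_choice {A B : Type} (P : A -> B -> Prop) : (forall a, exists b, P a b) -> exists f, forall a, P a (f a).
Proof.
  intros H. exists (fun a => proj1_sig (constructive_indefinite_description _ (H a))).
  intros a. apply (proj2_sig (constructive_indefinite_description _ (H a))).
Qed.

Lemma pow_half_small (C : R) : 0 < C -> exists N, forall n, (N <= n)%nat -> (/ 2) ^ n < C.
Proof.
  intros HC. destruct (pow_lt_1_zero (/ 2) ltac:(rewrite Rabs_right; lra) C HC) as [N HN].
  exists N. intros n Hn. have := HN n Hn. rewrite Rabs_right //. apply Rle_ge, pow_le. lra.
Qed.

Lemma sq_le (a b : R) : 0 <= a -> 0 <= b -> a * a <= b * b -> a <= b.
Proof. intros. destruct (Rle_lt_dec a b); auto. nra. Qed.


Section Hilb.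
Context {X : CompleteNormedModule R_AbsRing} (ip : X -> X -> R) (Hip : is_inner_product ip).

Lemma ip_sym x y : ip x y = ip y x.
Proof. apply Hip. Qed.
Lemma ip_plus_l x y z : ip (plus x y) z = ip x z + ip y z.
Proof. apply Hip. Qed.
Lemma ip_scal_l (a : R) x y : ip (scal a x) y = a * ip x y.
Proof. apply Hip. Qed.
Lemma ip_pos x : 0 <= ip x x.
Proof. apply Hip. Qed.
Lemma norm_ip x : norm x = sqrt (ip x x).
Proof. apply Hip. Qed.
Lemma ip_plus_r x y z : ip x (plus y z) = ip x y + ip x z.
Proof. rewrite ip_sym ip_plus_l (ip_sym y) (ip_sym z); auto. Qed.
Lemma ip_scal_r (a : R) x y : ip x (scal a y) = a * ip x y.
Proof. rewrite ip_sym ip_scal_l (ip_sym y); auto. Qed.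
Lemma ip_zero_l y : ip zero y = 0.
Proof. have H := ip_plus_l zero zero y. rewrite plus_zero_r in H. lra. Qed.
Lemma ip_zero_r y : ip y zero = 0.
Proof. rewrite ip_sym; apply ip_zero_l. Qed.
Lemma ip_opp_l x y : ip (opp x) y = - ip x y.
Proof. have H := ip_plus_l x (opp x) y. rewrite plus_opp_r ip_zero_l in H. lra. Qed.
Lemma ip_opp_r x y : ip y (opp x) = - ip y x.
Proof. rewrite ip_sym ip_opp_l ip_sym; auto. Qed.
Lemma ip_minus_l x y z : ip (minus x y) z = ip x z - ip y z.
Proof. unfold minus. rewrite ip_plus_l ip_opp_l. ring. Qed.
Lemma ip_minus_r x y z : ip z (minus x y) = ip z x - ip z y.
Proof. unfold minus. rewrite ip_plus_r ip_opp_r. ring. Qed.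
Lemma nsq x : norm x * norm x = ip x x.
Proof. rewrite norm_ip. apply sqrt_sqrt, ip_pos. Qed.

Lemma cs x y : ip x y <= norm x * norm y.
Proof.
  have H : norm (plus x y) <= norm x + norm y := norm_triangle x y.
  have H0 := norm_ge_0 (plus x y).
  have H1 := norm_ge_0 x. have H2 := norm_ge_0 y.
  have E := nsq (plus x y). rewrite ip_plus_l !ip_plus_r (ip_sym y x) -nsq -(nsq y) in E.
  have : norm (plus x y) * norm (plus x y) <= (norm x + norm y) * (norm x + norm y)
    by apply Rmult_le_compat; lra.
  lra.
Qed.

Lemma vec_eq_ip a b : ip (minus a b) (minus a b) = 0 -> a = b.
Proof.
  intros H. rewrite <- nsq in H.
  have : norm (minus a b) = 0 by nra.
  move/norm_eq_zero => H'.
  replace a with (plus (minus a b) b).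
  - rewrite H' plus_comm plus_zero_r; auto.
  - by rewrite /minus -plus_assoc plus_opp_l plus_zero_r.
Qed.

Lemma norm_le_eps (a : X) : (forall eps, 0 < eps -> norm a <= eps) -> a = zero.
Proof.
  intros H. have N0 : norm a = 0.
  { have := norm_ge_0 a.
    destruct (Rle_lt_dec (norm a) 0). lra.
    have := H (norm a / 2) ltac:(lra). lra. }
  by move/norm_eq_zero: N0.
Qed.


Ltac ipx := repeat progress rewrite ?ip_plus_l ?ip_plus_r ?ip_minus_l ?ip_minus_r ?ip_scal_l ?ip_scal_r ?ip_opp_l ?ip_opp_r ?ip_zero_l ?ip_zero_r.
Ltac ipxh H := repeat progress rewrite ?ip_plus_l ?ip_plus_r ?ip_minus_l ?ip_minus_r ?ip_scal_l ?ip_scal_r ?ip_opp_l ?ip_opp_r ?ip_zero_l ?ip_zero_r in H.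
Ltac ipcanon := repeat match goal with
  | |- context [ip ?a ?b] => match goal with |- context [ip b a] =>
       tryif constr_eq a b then fail else rewrite (ip_sym b a) end end.
Ltac vec := apply vec_eq_ip; ipx; ipcanon; ring.

Lemma vtest (f1 f2 e1 e2 : X) : minus (minus f1 e1) (minus f2 e2) = plus (minus f1 f2) (opp (minus e1 e2)).
Proof. vec. Qed.
Lemma vtest2 (u v : X) (l : R) : minus (plus (scal l v) (scal (1 - l) u)) u = scal l (minus v u).
Proof. vec. Qed.


Lemma norm_minus_sym (a b : X) : norm (minus a b) = norm (minus b a).
Proof. by rewrite -opp_minus norm_opp. Qed.

Lemma norm_tri3 (a b c : X) : norm (minus a c) <= norm (minus a b) + norm (minus b c).
Proof.
  have H : norm (plus (minus a b) (minus b c)) <= norm (minus a b) + norm (minus b c) := norm_triangle _ _.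
  have E : minus a c = plus (minus a b) (minus b c) by vec.
  rewrite E. exact H.
Qed.

Lemma ballX (x y : X) (eps : R) : norm (minus y x) < eps -> ball x eps y.
Proof. exact (@norm_compat1 R_AbsRing (CompleteNormedModule.NormedModule R_AbsRing X) x y eps). Qed.
Lemma ballX2 (x y : X) (eps : posreal) : ball x eps y -> norm (minus y x) < @norm_factor R_AbsRing (CompleteNormedModule.NormedModule R_AbsRing X) * eps.
Proof. exact (@norm_compat2 R_AbsRing (CompleteNormedModule.NormedModule R_AbsRing X) x y eps). Qed.

Lemma geo_conv (z : nat -> X) (M q : R) : 0 <= q < 1 ->
  (forall n, norm (minus (z (S n)) (z n)) <= M * q ^ n) ->
  forall n, norm (minus (z n) (lim (filtermap z eventually))) <= M * q ^ n / (1 - q).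
Proof.
  intros Hq Hz.
  have HM : 0 <= M.
  { have := Hz O. have := norm_ge_0 (minus (z 1%nat) (z 0%nat)). simpl. lra. }
  have S1 : forall n k, norm (minus (z (n + k)%nat) (z n)) <= M * q ^ n * (1 - q ^ k) / (1 - q).
  { intros n k. induction k as [|k IH].
    - rewrite Nat.add_0_r minus_eq_zero norm_zero. simpl.
      have -> : M * q ^ n * (1 - 1) / (1 - q) = 0 by field; lra. lra.
    - eapply Rle_trans. apply (norm_tri3 _ (z (n + k)%nat)).
      rewrite Nat.add_succ_r.
      have H1 := Hz (n + k)%nat. rewrite pow_add in H1.
      have -> : M * q ^ n * (1 - q ^ S k) / (1 - q) = M * (q ^ n * q ^ k) + M * q ^ n * (1 - q ^ k) / (1 - q).
      { simpl. field. lra. }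
      lra. }
  have S2 : forall n m, (n <= m)%nat -> norm (minus (z m) (z n)) <= M * q ^ n / (1 - q).
  { intros n m Hnm. have -> : m = (n + (m - n))%nat by lia.
    eapply Rle_trans. apply S1.
    have := pow_le q (m - n) ltac:(lra). have := pow_le q n ltac:(lra).
    intros. apply Rmult_le_compat_r. have : 0 < 1 - q by lra. intros; apply Rlt_le, Rinv_0_lt_compat; lra.
    have := Rmult_le_pos _ _ (Rmult_le_pos _ _ HM H) H0. nra. }
  have Hlim : forall e : R, 0 < e -> exists N, forall n, (N <= n)%nat -> M * q ^ n / (1 - q) < e.
  { intros e He. destruct (pow_lt_1_zero q ltac:(rewrite Rabs_right; lra) (e * (1 - q) / (M + 1))) as [N HN].
    { apply Rdiv_lt_0_compat; nra. }
    exists N. intros n Hn. have := HN n Hn. rewrite Rabs_right. 2: apply Rle_ge, pow_le; lra.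
    intros H. apply (Rmult_lt_reg_r (1 - q)). lra.
    have -> : M * q ^ n / (1 - q) * (1 - q) = M * q ^ n by field; lra.
    have : q ^ n * (M + 1) < e * (1 - q).
    { have E : e * (1 - q) = e * (1 - q) / (M + 1) * (M + 1) by field; lra.
      rewrite E. apply Rmult_lt_compat_r; lra. }
    have := pow_le q n ltac:(lra). nra. }
  set F := filtermap z eventually.
  have FP : ProperFilter F by apply filtermap_proper_filter, eventually_filter.
  have Fc : cauchy F.
  { intros eps. destruct (Hlim eps (cond_pos eps)) as [N HN].
    exists (z N). exists N. intros n Hn. apply ballX.
    eapply Rle_lt_trans. apply S2; lia. apply HN. lia. }
  have Hc := complete_cauchy F FP Fc.
  intros n. apply Rle_plus_epsilon. intros d Hd.
  have Hnf := @norm_factor_gt_0 R_AbsRing (CompleteNormedModule.NormedModule R_AbsRing X).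
  set nf := @norm_factor R_AbsRing (CompleteNormedModule.NormedModule R_AbsRing X) in Hnf *.
  have d' : 0 < d / nf by apply Rdiv_lt_0_compat.
  destruct (Hc (mkposreal _ d')) as [N HN].
  have Hb := HN (max n N) ltac:(lia).
  have Hb2 := ballX2 _ _ _ Hb. simpl in Hb2.
  have E : nf * (d / nf) = d by field; lra.
  rewrite E in Hb2.
  eapply Rle_trans. apply (norm_tri3 _ (z (max n N))).
  rewrite (norm_minus_sym (z n)).
  have := S2 n (max n N) ltac:(lia). lra.
Qed.


Lemma eq_small (a b : X) : (forall eps, 0 < eps -> norm (minus a b) <= eps) -> a = b.
Proof.
  intros H. have Z := norm_le_eps _ H.
  apply vec_eq_ip. rewrite Z ip_zero_l. auto.
Qed.

Lemma conv_filterlim (z : nat -> X) (y : X) :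
  (forall eps, 0 < eps -> exists N, forall n, (N <= n)%nat -> norm (minus (z n) y) < eps) ->
  filterlim z eventually (locally y).
Proof.
  intros H P [eps HP]. destruct (H eps (cond_pos eps)) as [N HN].
  exists N. intros n Hn. apply HP. apply ballX. apply HN. lia.
Qed.

Lemma small_l (E D : R) : 0 <= D -> (forall l, 0 < l <= 1 -> 0 <= l * E + l * l * D) -> 0 <= E.
Proof.
  intros HD H. destruct (Rle_lt_dec 0 E) as [|HE]; auto.
  set l := Rmin 1 (- E / (2 * (D + 1))).
  have Hl1 : l <= 1 by apply Rmin_l.
  have Hl2 : l <= - E / (2 * (D + 1)) by apply Rmin_r.
  have Hl0 : 0 < l.
  { rewrite /l /Rmin. destruct Rle_dec. lra. apply Rdiv_lt_0_compat; lra. }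
  have := H l ltac:(lra).
  have : l * D <= - E / (2 * (D + 1)) * D by apply Rmult_le_compat_r.
  have : - E / (2 * (D + 1)) * D < - E / 2.
  { apply (Rmult_lt_reg_r (2 * (D + 1))). lra.
    have -> : - E / (2 * (D + 1)) * D * (2 * (D + 1)) = - E * D by field; lra.
    have -> : - E / 2 * (2 * (D + 1)) = - E * D - E by field. lra. }
  intros. have : l * E + l * l * D = l * (E + l * D) by ring.
  have : E + l * D < 0 by lra.
  nra.
Qed.


Lemma cont_eps1 (I : R -> Prop) (u : R -> X) : cont_on I u ->
  forall t, I t -> forall eps, 0 < eps -> exists del, 0 < del /\
    forall s, I s -> Rabs (s - t) < del -> norm (minus (u s) (u t)) < eps.
Proof.
  intros H t It eps He.
  have Hnf := @norm_factor_gt_0 R_AbsRing (CompleteNormedModule.NormedModule R_AbsRing X).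
  set nf := @norm_factor R_AbsRing (CompleteNormedModule.NormedModule R_AbsRing X) in Hnf *.
  have e' : 0 < eps / nf by apply Rdiv_lt_0_compat.
  have := H t It _ (locally_ball (u t) (mkposreal _ e')).
  intros [del Hdel]. exists del. split. apply cond_pos.
  intros s Is Hs. have Hb := Hdel s (proj2 (ball_R _ _ _) Hs) Is.
  have := ballX2 _ _ _ Hb. simpl. have -> : nf * (eps / nf) = eps by field; lra. auto.
Qed.

Lemma cont_eps2 (I : R -> Prop) (u : R -> X) :
  (forall t, I t -> forall eps, 0 < eps -> exists del, 0 < del /\
    forall s, I s -> Rabs (s - t) < del -> norm (minus (u s) (u t)) < eps) -> cont_on I u.
Proof.
  intros H t It P [eps HP]. destruct (H t It eps (cond_pos eps)) as [del [Hd Hdel]].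
  exists (mkposreal _ Hd). intros s Hs Is. apply HP. apply ballX. apply Hdel; auto.
Qed.

Lemma norm_gdiff (a b c d : X) : norm (minus (minus a b) (minus c d)) <= norm (minus a c) + norm (minus b d).
Proof.
  have H : norm (plus (minus a c) (opp (minus b d))) <= norm (minus a c) + norm (opp (minus b d)) := norm_triangle _ _.
  rewrite norm_opp in H. have E : minus (minus a b) (minus c d) = plus (minus a c) (opp (minus b d)) by vec.
  rewrite E. exact H.
Qed.

Lemma contw_d (I : R -> Prop) (u v : R -> X) b : cont_on I u -> cont_on I v ->
  (forall s, 0 <= s <= b -> I s) -> contw b (fun s => norm (minus (u s) (v s))).
Proof.
  intros Hu Hv Hb t Ht eps He.
  destruct (cont_eps1 I u Hu t (Hb t Ht) (eps / 2) ltac:(lra)) as [d1 [Hd1 H1]].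
  destruct (cont_eps1 I v Hv t (Hb t Ht) (eps / 2) ltac:(lra)) as [d2 [Hd2 H2]].
  exists (Rmin d1 d2). split. apply Rmin_glb_lt; auto.
  intros s Hs Hst. have := Rmin_l d1 d2. have := Rmin_r d1 d2. intros.
  have := H1 s (Hb s Hs) ltac:(lra). have := H2 s (Hb s Hs) ltac:(lra).
  have := norm_triangle_inv (minus (u s) (v s)) (minus (u t) (v t)).
  have := norm_gdiff (u s) (v s) (u t) (v t). intros. 
  have : Rabs (norm (minus (u s) (v s)) - norm (minus (u t) (v t))) <= norm (minus (minus (u s) (v s)) (minus (u t) (v t))) by auto.
  lra.
Qed.

Section Stat.
Context (K : X -> Prop) (j : X -> R) (HK : closed_convex_cone K) (Hj : j_hyp K j).

Lemma K0 : K zero.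
Proof.
  destruct HK as [[x Hx] [_ [_ Hs]]]. have := Hs x 0 Hx ltac:(lra).
  have -> : scal 0 x = (zero : X) by vec. auto.
Qed.
Lemma Kscal u l : K u -> 0 <= l -> K (scal l u).
Proof. destruct HK as [_ [_ [_ Hs]]]. apply Hs. Qed.
Lemma Kconv u v l : K u -> K v -> 0 <= l <= 1 -> K (plus (scal l u) (scal (1 - l) v)).
Proof. destruct HK as [_ [_ [Hc _]]]. apply Hc. Qed.
Lemma Kclosed : closed K.
Proof. apply HK. Qed.
Lemma jconv u v l : K u -> K v -> 0 <= l <= 1 -> j (plus (scal l u) (scal (1 - l) v)) <= l * j u + (1 - l) * j v.
Proof. destruct Hj as [H _]. apply H. Qed.
Lemma jhom u l : K u -> 0 < l -> j (scal l u) = l * j u.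
Proof. destruct Hj as [_ [H _]]. apply H. Qed.
Lemma j0 : j zero = 0.
Proof. have := jhom zero 2 K0 ltac:(lra). have -> : scal 2 (zero : X) = (zero : X) by vec. lra. Qed.
Lemma jlip : exists Lj, 0 <= Lj /\ forall u v, K u -> K v -> j u - j v <= Lj * norm (minus u v).
Proof.
  destruct Hj as [_ [_ [Lj [HL H]]]]. exists Lj. split; auto.
  intros u v Hu Hv. have := H u v Hu Hv. split_Rabs; lra.
Qed.

Lemma Cset_iff c : Cset ip K j c <-> forall v, K v -> ip c v <= j v.
Proof.
  rewrite /Cset /Jext. split.
  - intros H v Hv. have := H v. destruct excluded_middle_informative; simpl; tauto.
  - intros H v. destruct excluded_middle_informative; simpl; auto.
Qed.

Lemma mid_id (a b x : X) :
  ip (minus (plus (scal (/ 2) a) (scal (1 - / 2) b)) x) (minus (plus (scal (/ 2) a) (scal (1 - / 2) b)) x)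
  = / 2 * ip (minus a x) (minus a x) + / 2 * ip (minus b x) (minus b x) - / 4 * ip (minus a b) (minus a b).
Proof. ipx. ipcanon. field. Qed.

Lemma seg_id (w v x : X) (l : R) :
  ip (minus (plus (scal l v) (scal (1 - l) w)) x) (minus (plus (scal l v) (scal (1 - l) w)) x)
  = ip (minus w x) (minus w x) + 2 * l * ip (minus w x) (minus v w) + l * l * ip (minus v w) (minus v w).
Proof. ipx. ipcanon. ring. Qed.


Lemma prox_ex (x : X) (rho : R) : 0 < rho ->
  exists w, K w /\ forall v, K v -> 0 <= ip (minus w x) (minus v w) + rho * (j v - j w).
Proof.
  intros Hr. destruct jlip as [Lj [HLj HjL]].
  set F := fun w => ip (minus w x) (minus w x) / 2 + rho * j w.
  have jlow : forall w, K w -> - (Lj * norm w) <= j w.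
  { intros w Hw. have := HjL zero w K0 Hw. rewrite j0.
    have -> : minus zero w = opp w by vec. rewrite norm_opp. lra. }
  set B := (norm x + rho * Lj) ^ 2 / 2.
  have Flow : forall w, K w -> - B <= F w.
  { intros w Hw. rewrite /F /B.
    have E : ip (minus w x) (minus w x) = ip w w - 2 * ip w x + ip x x by ipx; ipcanon; ring.
    rewrite E -!nsq. have := cs w x. have := jlow w Hw.
    have := norm_ge_0 w. have := norm_ge_0 x.
    set a := norm w. set b := norm x. intros.
    have : rho * (- (Lj * a)) <= rho * j w by apply Rmult_le_compat_l; lra.
    have := pow2_ge_0 (a - b - rho * Lj). have := pow2_ge_0 b. nra. }
  set E := fun y => exists w, K w /\ y = - F w.
  destruct (completeness E) as [L [HLu HLl]].
  { exists B. intros y [w [Hw ->]]. have := Flow w Hw. lra. }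
  { exists (- F zero). exists zero. split; auto. apply K0. }
  set m := - L.
  have Hm1 : forall w, K w -> m <= F w.
  { intros w Hw. have := HLu (- F w) ltac:(exists w; auto). rewrite /m. lra. }
  have Hm2 : forall eps, 0 < eps -> exists w, K w /\ F w < m + eps.
  { intros eps He. destruct (excluded_middle_informative (exists w, K w /\ F w < m + eps)) as [|Hn]; auto.
    exfalso. have : L <= L - eps.
    { apply HLl. intros y [w [Hw ->]]. destruct (Rlt_le_dec (F w) (m + eps)).
      - exfalso; apply Hn; exists w; auto.
      - rewrite /m in r. lra. }
    lra. }
  destruct (my_choice (fun n w => K w /\ F w < m + (/ 2) ^ n * (/ 2) ^ n)) as [ws Hws].
  { intros n. apply Hm2. have := pow_lt (/ 2) n ltac:(lra). nra. }
  have Hstep : forall n, norm (minus (ws (S n)) (ws n)) <= 3 * (/ 2) ^ n.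
  { intros n. destruct (Hws n) as [Ka Fa]. destruct (Hws (S n)) as [Kb Fb].
    set a := ws (S n) in Kb Fb *. set b := ws n in Ka Fa *.
    set mid := plus (scal (/ 2) a) (scal (1 - / 2) b).
    have Kmid : K mid by apply Kconv; auto; lra.
    have Hmid := Hm1 mid Kmid. rewrite /F /mid mid_id in Hmid.
    have Jm := jconv a b (/ 2) Kb Ka ltac:(lra).
    have : rho * j (plus (scal (/ 2) a) (scal (1 - / 2) b)) <= rho * (/ 2 * j a + (1 - / 2) * j b)
      by apply Rmult_le_compat_l; lra.
    rewrite /F in Fa Fb. simpl in Fb.
    have Hh := pow_le (/ 2) n ltac:(lra). set h := (/ 2) ^ n in Fa Fb Hh *.
    have Hd : ip (minus a b) (minus a b) <= 9 * (h * h) by nra.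
    rewrite -nsq in Hd. have := norm_ge_0 (minus a b).
    set d := norm (minus a b) in Hd *. intros. nra. }
  have Hconv := geo_conv ws 3 (/ 2) ltac:(lra) Hstep.
  set w := lim (filtermap ws eventually) in Hconv.
  have Hconv' : forall n, norm (minus (ws n) w) <= 6 * (/ 2) ^ n.
  { intros n. have := Hconv n. have -> : 3 * (/ 2) ^ n / (1 - / 2) = 6 * (/ 2) ^ n by field. auto. }
  have Kw : K w.
  { apply (closed_filterlim (F := eventually) ws K w).
    - apply conv_filterlim. intros eps He.
      destruct (pow_half_small (eps / 7) ltac:(lra)) as [N HN]. exists N. intros n Hn.
      have := HN n Hn. have := Hconv' n. lra.
    - intros n. apply Hws.
    - apply Kclosed. }
  have Fcont : forall a b, K a -> K b -> F a <= F b + norm (minus a b) * (3 / 2 * norm (minus a b) + norm (minus a x) + rho * Lj).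
  { intros a b Ka Kb. rewrite /F. have := HjL a b Ka Kb.
    have := norm_tri3 a b x. have := norm_tri3 b a x.
    rewrite -!nsq (norm_minus_sym b a).
    have := norm_ge_0 (minus a b). have := norm_ge_0 (minus b x). have := norm_ge_0 (minus a x).
    set d := norm (minus a b). set e := norm (minus b x). set g := norm (minus a x).
    intros. have : rho * (j a - j b) <= rho * (Lj * d) by apply Rmult_le_compat_l; lra.
    have : g * g <= (d + e) * (d + e) by apply Rmult_le_compat; lra.
    nra. }
  have Fw : F w <= m.
  { apply Rle_plus_epsilon. intros eps He.
    set C := norm (minus w x) + rho * Lj.
    have HC : 0 <= C by have := norm_ge_0 (minus w x); have := Rmult_le_pos _ _ (Rlt_le _ _ Hr) HLj; rewrite /C; lra.
    destruct (pow_half_small (Rmin 1 (eps / (55 + 6 * C)))) as [N HN].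
    { apply Rmin_glb_lt. lra. apply Rdiv_lt_0_compat; lra. }
    have HhN := HN N (le_n _).
    have Hh0 := pow_le (/ 2) N ltac:(lra).
    set h := (/ 2) ^ N in HhN Hh0.
    have h1 : h <= 1 by have := Rmin_l 1 (eps / (55 + 6 * C)); lra.
    have h2 : h * (55 + 6 * C) <= eps.
    { have := Rmin_r 1 (eps / (55 + 6 * C)).
      intros. have Hh' : h <= eps / (55 + 6 * C) by lra.
      have := Rmult_le_compat_r (55 + 6 * C) _ _ ltac:(lra) Hh'.
      have -> : eps / (55 + 6 * C) * (55 + 6 * C) = eps by field; lra. auto. }
    destruct (Hws N) as [KN FN].
    have := Fcont w (ws N) Kw KN.
    have Hd := Hconv' N. rewrite norm_minus_sym in Hd. fold h in Hd.
    have := norm_ge_0 (minus w (ws N)). set d := norm (minus w (ws N)) in Hd *.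
    fold C. fold h in FN. intros.
    have : d * (3 / 2 * d + C) <= 6 * h * (9 * h + C).
    { apply Rmult_le_compat; lra. }
    intros H1. have : h * h <= h by nra. unfold C in *. lra. }
  exists w. split; auto. intros v Kv.
  apply (small_l _ (ip (minus v w) (minus v w) / 2)).
  { have := ip_pos (minus v w). lra. }
  intros l Hl.
  set wl := plus (scal l v) (scal (1 - l) w).
  have Kwl : K wl by apply Kconv; auto; lra.
  have := Hm1 wl Kwl. rewrite /F /wl seg_id. rewrite /F in Fw.
  have Jl := jconv v w l Kv Kw ltac:(lra).
  have : rho * j (plus (scal l v) (scal (1 - l) w)) <= rho * (l * j v + (1 - l) * j w)
    by apply Rmult_le_compat_l; lra.
  intros. nra.
Qed.


Lemma prox_nonexp (x1 x2 w1 w2 : X) (rho : R) :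
  K w1 -> (forall v, K v -> 0 <= ip (minus w1 x1) (minus v w1) + rho * (j v - j w1)) ->
  K w2 -> (forall v, K v -> 0 <= ip (minus w2 x2) (minus v w2) + rho * (j v - j w2)) ->
  norm (minus w1 w2) <= norm (minus x1 x2).
Proof.
  intros K1 H1 K2 H2. have := H1 w2 K2. have := H2 w1 K1.
  have E : ip (minus w1 x1) (minus w2 w1) + ip (minus w2 x2) (minus w1 w2) =
    - ip (minus w1 w2) (minus w1 w2) + ip (minus x1 x2) (minus w1 w2) by ipx; ipcanon; ring.
  have := cs (minus x1 x2) (minus w1 w2). rewrite -nsq in E.
  have := norm_ge_0 (minus w1 w2). have := norm_ge_0 (minus x1 x2).
  intros. nra.
Qed.

Section StatA.
Context (A : X -> X) (mA LA : R) (HmA : 0 < mA) (HLA : 0 < LA)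
  (Hmono : forall u v, ip (minus (A u) (A v)) (minus u v) >= mA * (norm (minus u v)) ^ 2)
  (HAlip : forall u v, norm (minus (A u) (A v)) <= LA * norm (minus u v)).

Lemma stat_ex (f0 eta : X) : exists u, K u /\
  normal_cone ip (fun xi => exists c, Cset ip K j c /\ xi = minus f0 c) (plus (A u) eta) (opp u).
Proof.
  set g := minus f0 eta.
  set rho := mA / (LA * LA).
  have Hrho : 0 < rho by apply Rdiv_lt_0_compat; nra.
  destruct (my_choice (fun x w => K w /\ forall v, K v -> 0 <= ip (minus w x) (minus v w) + rho * (j v - j w)))
    as [proxf Hprox].
  { intros x. apply prox_ex; auto. }
  set P := fun u => proxf (minus u (scal rho (minus (A u) g))).
  set k := Rmax (1 - mA * mA / (LA * LA)) 0.
  set q := (1 + k) / 2.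
  have Hk0 : 0 <= k by apply Rmax_r.
  have Hk1 : k < 1.
  { rewrite /k /Rmax. destruct Rle_dec. lra. have : 0 < mA * mA / (LA * LA) by apply Rdiv_lt_0_compat; nra. lra. }
  have Hq : 0 <= q < 1 by rewrite /q; lra.
  have Hcontr : forall u1 u2, norm (minus (P u1) (P u2)) <= q * norm (minus u1 u2).
  { intros u1 u2. eapply Rle_trans.
    - apply (prox_nonexp (minus u1 (scal rho (minus (A u1) g))) (minus u2 (scal rho (minus (A u2) g))) _ _ rho); apply Hprox.
    - set y1 := minus u1 (scal rho (minus (A u1) g)).
      set y2 := minus u2 (scal rho (minus (A u2) g)).
      have E : ip (minus y1 y2) (minus y1 y2) = ip (minus u1 u2) (minus u1 u2)
        - 2 * rho * ip (minus (A u1) (A u2)) (minus u1 u2) + rho * rho * ip (minus (A u1) (A u2)) (minus (A u1) (A u2)).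
      { rewrite /y1 /y2. ipx; ipcanon; ring. }
      rewrite -!nsq in E.
      have M1 := Hmono u1 u2. have M2 := HAlip u1 u2.
      have := norm_ge_0 (minus (A u1) (A u2)). have := norm_ge_0 (minus u1 u2).
      have := norm_ge_0 (minus y1 y2).
      set a := norm (minus (A u1) (A u2)) in E M1 M2 *.
      set d := norm (minus u1 u2) in E M1 M2 *.
      set e := norm (minus y1 y2) in E *. intros He Hd Ha.
      have Ha2 : a * a <= LA * LA * (d * d) by nra.
      have Hkq : 1 - mA * mA / (LA * LA) <= q * q.
      { have := Rmax_l (1 - mA * mA / (LA * LA)) 0. fold k. rewrite /q. nra. }
      have E2 : e * e <= (1 - mA * mA / (LA * LA)) * (d * d).
      { rewrite E. have -> : (1 - mA * mA / (LA * LA)) * (d * d) = d * d - 2 * rho * (mA * d ^ 2) + rho * rho * (LA * LA * (d * d)).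
        { rewrite /rho. field. nra. }
        have : rho * rho * (a * a) <= rho * rho * (LA * LA * (d * d)) by apply Rmult_le_compat_l; nra.
        have : 2 * rho * (mA * d ^ 2) <= 2 * rho * ip (minus (A u1) (A u2)) (minus u1 u2) by apply Rmult_le_compat_l; lra.
        lra. }
      have : e * e <= (q * d) * (q * d) by nra.
      intros. apply sq_le; auto. have := Rmult_le_pos _ _ (proj1 Hq) Hd. lra. }
  set z := fun n => Nat.iter n P zero.
  have Hz : forall n, z (S n) = P (z n) by reflexivity.
  set M0 := norm (minus (z 1%nat) (z 0%nat)).
  have Hstep : forall n, norm (minus (z (S n)) (z n)) <= M0 * q ^ n.
  { induction n as [|n IH]. rewrite pow_O Rmult_1_r. apply Rle_refl.
    rewrite (Hz (S n)) (Hz n). eapply Rle_trans. apply Hcontr. rewrite -Hz. simpl.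
    have := Rmult_le_compat_l q _ _ ltac:(lra) IH. intros H. rewrite -(Hz n). simpl in H |- *. lra. }
  have Hconv := geo_conv z M0 q Hq Hstep.
  set u := lim (filtermap z eventually) in Hconv.
  have HM0 : 0 <= M0 by apply norm_ge_0.
  have Hsmall : forall eps, 0 < eps -> exists N, forall n, (N <= n)%nat -> M0 * q ^ n / (1 - q) < eps.
  { intros eps He. destruct (pow_lt_1_zero q ltac:(rewrite Rabs_right; lra) (eps * (1 - q) / (M0 + 1))) as [N HN].
    { apply Rdiv_lt_0_compat; nra. }
    exists N. intros n Hn. have := HN n Hn. rewrite Rabs_right. 2: apply Rle_ge, pow_le; lra.
    intros H. apply (Rmult_lt_reg_r (1 - q)). lra.
    have -> : M0 * q ^ n / (1 - q) * (1 - q) = M0 * q ^ n by field; lra.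
    have : q ^ n * (M0 + 1) < eps * (1 - q).
    { have E : eps * (1 - q) = eps * (1 - q) / (M0 + 1) * (M0 + 1) by field; lra.
      rewrite E. apply Rmult_lt_compat_r; lra. }
    have := pow_le q n ltac:(lra). nra. }
  have Kz : forall n, K (z n).
  { intros [|n]. apply K0. rewrite Hz. apply Hprox. }
  have Ku : K u.
  { apply (closed_filterlim (F := eventually) z K u).
    - apply conv_filterlim. intros eps He. destruct (Hsmall eps He) as [N HN].
      exists N. intros n Hn. have := HN n Hn. have := Hconv n. lra.
    - apply Kz.
    - apply Kclosed. }
  have Hfix : P u = u.
  { apply eq_small. intros eps He. destruct (Hsmall (eps / 2) ltac:(lra)) as [N HN].
    eapply Rle_trans. apply (norm_tri3 _ (z (S N))).
    rewrite Hz. eapply Rle_trans. apply Rplus_le_compat_r. apply Hcontr.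
    have := Hconv N. have := Hconv (S N). have := HN N (le_n _). have := HN (S N) ltac:(lia).
    rewrite norm_minus_sym. intros. have : q * norm (minus (z N) u) <= norm (minus (z N) u).
    { have := norm_ge_0 (minus (z N) u). nra. }
    intros H3. rewrite (norm_minus_sym u (z N)) in H3 *. lra. }
  destruct (Hprox (minus u (scal rho (minus (A u) g)))) as [_ Hch].
  fold (P u) in Hch. rewrite Hfix in Hch.
  have VI : forall v, K v -> 0 <= ip (minus (A u) g) (minus v u) + (j v - j u).
  { intros v Kv. have := Hch v Kv.
    have -> : ip (minus u (minus u (scal rho (minus (A u) g)))) (minus v u) = rho * ip (minus (A u) g) (minus v u)
      by ipx; ipcanon; ring.
    intros H. apply (Rmult_le_reg_l rho); auto. lra. }
  set c := minus g (A u).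
  have Hcu : ip c u = j u.
  { have V1 := VI zero K0. have V2 := VI (scal 2 u) (Kscal u 2 Ku ltac:(lra)).
    rewrite j0 in V1. rewrite jhom in V2; auto; try lra.
    revert V1 V2. rewrite /c. ipx; ipcanon. intros. lra. }
  have Cc : Cset ip K j c.
  { apply Cset_iff. intros v Kv. have := VI v Kv. revert Hcu. rewrite /c. ipx; ipcanon. intros. lra. }
  exists u. split; auto. split.
  - exists c. split; auto. rewrite /c /g. vec.
  - intros w [c' [Cc' ->]]. have := (proj1 (Cset_iff c') Cc' u Ku).
    have E : plus (A u) eta = minus f0 c by rewrite /c /g; vec.
    rewrite E. revert Hcu. ipx; ipcanon. intros. lra.
Qed.


Lemma sol_lip (f1 f2 e1 e2 u1 u2 : X) :
  normal_cone ip (fun xi => exists c, Cset ip K j c /\ xi = minus f1 c) (plus (A u1) e1) (opp u1) ->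
  normal_cone ip (fun xi => exists c, Cset ip K j c /\ xi = minus f2 c) (plus (A u2) e2) (opp u2) ->
  mA * norm (minus u1 u2) <= norm (minus (minus f1 e1) (minus f2 e2)).
Proof.
  intros [[c1 [C1 E1]] N1] [[c2 [C2 E2]] N2].
  have I1 := N1 (minus f1 c2) ltac:(exists c2; auto).
  have I2 := N2 (minus f2 c1) ltac:(exists c1; auto).
  rewrite E1 in I1. rewrite E2 in I2.
  have R1 : ip (minus u1 u2) (plus (A u1) e1) = ip (minus u1 u2) (minus f1 c1) by rewrite E1.
  have R2 : ip (minus u1 u2) (plus (A u2) e2) = ip (minus u1 u2) (minus f2 c2) by rewrite E2.
  have Mo := Hmono u1 u2.
  have CS := cs (minus u1 u2) (minus (minus f1 e1) (minus f2 e2)).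
  have := norm_ge_0 (minus u1 u2). have := norm_ge_0 (minus (minus f1 e1) (minus f2 e2)).
  set n := norm (minus u1 u2) in Mo CS *.
  set N' := norm (minus (minus f1 e1) (minus f2 e2)) in CS *.
  intros HN Hn.
  have key : mA * (n * n) <= n * N'.
  { revert I1 I2 R1 R2 Mo CS. ipx. ipcanon. intros. nra. }
  destruct (Rle_lt_dec n 0). have : n = 0 by lra. intros ->. lra.
  apply (Rmult_le_reg_l n); auto. nra.
Qed.


Section Time.
Context (T : Rbar) (f : R -> X) (Sop : (R -> X) -> (R -> X))
  (Hf : cont_on (time_interval T) f)
  (HScont : forall u, cont_on (time_interval T) u -> cont_on (time_interval T) (Sop u))
  (Hhist : history_dependent (time_interval T) Sop).

Let I := time_interval T.

Lemma I_sub t s : I t -> 0 <= s <= t -> I s.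
Proof.
  rewrite /I /time_interval. intros [H0 H1] Hs. split. lra.
  eapply Rbar_le_trans. 2: apply H1. simpl. lra.
Qed.

Lemma I_nbhd t : I t -> exists b, t <= b /\ (forall s, 0 <= s <= b -> I s) /\
  (forall s, I s -> Rabs (s - t) < 1 -> s <= b).
Proof.
  rewrite /I /time_interval. intros [H0 H1]. destruct T as [Tr| |] eqn:ET.
  - exists Tr. simpl in H1. split; auto. split.
    + intros s Hs. split. lra. simpl. lra.
    + intros s [_ Hs] _. simpl in Hs. auto.
  - exists (t + 1). split. lra. split.
    + intros s Hs. split. lra. simpl. auto.
    + intros s _ Hs. split_Rabs; lra.
  - simpl in H1. contradiction.
Qed.

Lemma hist_b b : (forall s, 0 <= s <= b -> I s) -> exists L, 0 < L /\
  forall u1 u2, cont_on I u1 -> cont_on I u2 -> forall t, 0 <= t <= b ->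
  norm (minus (Sop u1 t) (Sop u2 t)) <= L * RInt (fun s => norm (minus (u1 s) (u2 s))) 0 t.
Proof.
  intros Hb. apply (Hhist (fun s => 0 <= s <= b)); auto. apply compact_P3.
Qed.

Definition Solp (f0 eta u : X) : Prop := K u /\
  normal_cone ip (fun xi => exists c, Cset ip K j c /\ xi = minus f0 c) (plus (A u) eta) (opp u).

Lemma solf_ex : exists solf : X * X -> X, forall p, Solp (fst p) (snd p) (solf p).
Proof. apply (my_choice (fun p u => Solp (fst p) (snd p) u)). intros [f0 eta]. apply stat_ex. Qed.

Lemma sol_lip' f1 f2 e1 e2 u1 u2 : Solp f1 e1 u1 -> Solp f2 e2 u2 ->
  mA * norm (minus u1 u2) <= norm (minus f1 f2) + norm (minus e1 e2).
Proof.
  intros [_ H1] [_ H2]. eapply Rle_trans. apply (sol_lip _ _ _ _ _ _ H1 H2). apply norm_gdiff.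
Qed.

Lemma cont_zero : cont_on I (fun _ => (zero : X)).
Proof. apply cont_eps2. intros t _ eps He. exists 1. split. lra. intros. rewrite minus_eq_zero norm_zero. auto. Qed.

Lemma main_result : exists u : R -> X,
    (cont_on I u /\ (forall t, I t -> K (u t)) /\
     forall t, I t -> normal_cone ip (Ct ip K j f t) (plus (A (u t)) (Sop u t)) (opp (u t))) /\
    (forall v : R -> X,
       (cont_on I v /\ (forall t, I t -> K (v t)) /\
        forall t, I t -> normal_cone ip (Ct ip K j f t) (plus (A (v t)) (Sop v t)) (opp (v t))) ->
       forall t, I t -> v t = u t).
Proof.
  destruct solf_ex as [solf Hsolf].
  set Phi := fun u t => solf (f t, Sop u t).
  have PhiS : forall u t, Solp (f t) (Sop u t) (Phi u t) by intros; apply (Hsolf (f t, Sop u t)).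
  have Phicont : forall u, cont_on I u -> cont_on I (Phi u).
  { intros u Hu. apply cont_eps2. intros t It eps He.
    destruct (cont_eps1 I f Hf t It (mA * eps / 2)) as [d1 [Hd1 H1]]. { have := Rmult_lt_0_compat _ _ HmA He. lra. }
    destruct (cont_eps1 I (Sop u) (HScont u Hu) t It (mA * eps / 2)) as [d2 [Hd2 H2]]. { have := Rmult_lt_0_compat _ _ HmA He. lra. }
    exists (Rmin d1 d2). split. apply Rmin_glb_lt; auto.
    intros s Is Hs. have := Rmin_l d1 d2. have := Rmin_r d1 d2. intros.
    have := sol_lip' _ _ _ _ _ _ (PhiS u s) (PhiS u t).
    have := H1 s Is ltac:(lra). have := H2 s Is ltac:(lra). intros.
    apply (Rmult_lt_reg_l mA); auto. lra. }
  set z := fun n => Nat.iter n Phi (fun _ => (zero : X)).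
  have Hz : forall n, z (S n) = Phi (z n) by reflexivity.
  have zcont : forall n, cont_on I (z n).
  { induction n as [|n IH]. apply cont_zero. rewrite Hz. apply Phicont; auto. }
  have zbound : forall b, 0 <= b -> (forall s, 0 <= s <= b -> I s) -> exists C, 0 <= C /\
     forall n s, 0 <= s <= b -> norm (minus (z (S n) s) (z n s)) <= C * (/ 2) ^ n.
  { intros b Hb0 Hb. destruct (hist_b b Hb) as [L [HL HLS]].
    set d := fun n s => norm (minus (z (S n) s) (z n s)).
    have dcont : forall n, contw b (d n) by intros n; apply (contw_d I); auto.
    destruct (contw_bounded b (d O) Hb0 (dcont O)) as [M [HM HMb]].
    set c := L / mA.
    have Hc : 0 <= c by apply Rlt_le, Rdiv_lt_0_compat.
    have Hit := exp_iter d b c M Hc HM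
      (fun n s Hs => contw_int b (d n) Hb0 (dcont n) s Hs) HMb.
    exists (M * exp ((2 * c + 1) * b)). split. have := exp_pos ((2 * c + 1) * b). nra.
    intros n s Hs.
    have : d n s <= M * exp ((2 * c + 1) * s) * (/ 2) ^ n.
    { apply Hit; auto. intros m r Hr.
      have := sol_lip' _ _ _ _ _ _ (PhiS (z (S m)) r) (PhiS (z m) r).
      rewrite minus_eq_zero norm_zero Rplus_0_l. rewrite -!Hz.
      have := HLS (z (S m)) (z m) (zcont (S m)) (zcont m) r Hr.
      intros H1 H2. rewrite /d /c.
      apply (Rmult_le_reg_l mA); auto.
      have -> : mA * (L / mA * RInt (fun s0 : R => norm (minus (z (S m) s0) (z m s0))) 0 r)
         = L * RInt (fun s0 : R => norm (minus (z (S m) s0) (z m s0))) 0 r by field; lra.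
      lra. }
    have : exp ((2 * c + 1) * s) <= exp ((2 * c + 1) * b).
    { destruct (Req_dec s b) as [->|Hne]. lra. apply Rlt_le, exp_increasing.
      apply Rmult_lt_compat_l. lra. lra. }
    have := pow_le (/ 2) n ltac:(lra). rewrite /d. intros. have := Rmult_le_compat_l (M * (/ 2) ^ n) _ _ (Rmult_le_pos _ _ HM H) H0. lra. }
  set u := fun t => lim (filtermap (fun n => z n t) eventually).
  have ubound : forall b, 0 <= b -> (forall s, 0 <= s <= b -> I s) -> exists C, 0 <= C /\
     forall n s, 0 <= s <= b -> norm (minus (z n s) (u s)) <= C * (/ 2) ^ n.
  { intros b Hb0 Hb. destruct (zbound b Hb0 Hb) as [C [HC HCb]].
    exists (2 * C). split. lra. intros n s Hs.
    have := geo_conv (fun n => z n s) C (/ 2) ltac:(lra) (fun n => HCb n s Hs) n.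
    have -> : C * (/ 2) ^ n / (1 - / 2) = 2 * C * (/ 2) ^ n by field. auto. }
  have ucont : cont_on I u.
  { apply cont_eps2. intros t It eps He.
    destruct (I_nbhd t It) as [b [Htb [Hb Hb2]]].
    have Hb0 : 0 <= b by have := proj1 It; lra.
    destruct (ubound b Hb0 Hb) as [C [HC HCb]].
    destruct (pow_half_small (eps / (3 * (C + 1)))) as [N HN]. { apply Rdiv_lt_0_compat; lra. }
    have HhN := HN N (le_n _). have Hh0 := pow_le (/ 2) N ltac:(lra). set h := (/ 2) ^ N in HhN Hh0 HCb.
    have Hch : C * h < eps / 3.
    { have : C * h <= C * (eps / (3 * (C + 1))) by apply Rmult_le_compat_l; lra.
      have : C * (eps / (3 * (C + 1))) < eps / 3.
      { have -> : C * (eps / (3 * (C + 1))) = eps / 3 * (C / (C + 1)) by field; lra.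
        have : C / (C + 1) < 1. { apply (Rmult_lt_reg_r (C + 1)). lra. have -> : C / (C + 1) * (C + 1) = C by field; lra. lra. }
        have : 0 < eps / 3 by lra. nra. }
      lra. }
    destruct (cont_eps1 I (z N) (zcont N) t It (eps / 3) ltac:(lra)) as [d1 [Hd1 H1]].
    exists (Rmin d1 1). split. apply Rmin_glb_lt; lra.
    intros s Is Hs. have := Rmin_l d1 1. have := Rmin_r d1 1. intros.
    have Hsb : 0 <= s <= b by split; [apply Is | apply Hb2; auto; lra].
    have := H1 s Is ltac:(lra). have := HCb N s Hsb. have Ht0 : 0 <= t <= b by split; [apply It|lra]. have := HCb N t Ht0.
    have := norm_tri3 (u s) (z N s) (u t). have := norm_tri3 (z N s) (z N t) (u t).
    have := norm_minus_sym (z N s) (u s). rewrite /h in Hch. intros. lra. }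
  have ufix : forall t, I t -> Phi u t = u t.
  { intros t It. have Hb0 : 0 <= t by apply It.
    have Hb : forall s, 0 <= s <= t -> I s by intros; apply (I_sub t); auto.
    destruct (hist_b t Hb) as [L [HL HLS]].
    destruct (ubound t Hb0 Hb) as [C [HC HCb]].
    apply eq_small. intros eps He.
    set Q := L * t * C / mA + C + 1.
    have HQ : 0 < Q. { have : 0 <= L * t * C / mA. { apply Rmult_le_pos. have := Rmult_le_pos _ _ (Rlt_le _ _ HL) Hb0. nra. apply Rlt_le, Rinv_0_lt_compat; auto. } rewrite /Q. lra. }
    destruct (pow_half_small (eps / Q)) as [N HN]. by apply Rdiv_lt_0_compat.
    have HhN := HN N (le_n _). have Hh0 := pow_le (/ 2) N ltac:(lra). set h := (/ 2) ^ N in HhN Hh0 HCb.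
    have Hint : RInt (fun s => norm (minus (u s) (z N s))) 0 t <= t * (C * h).
    { eapply Rle_trans. apply (RInt_le _ (fun _ => C * h)). lra.
      apply (contw_int t). lra. apply (contw_d I); auto. split; lra.
      apply ex_RInt_const.
      intros x Hx. rewrite norm_minus_sym. apply HCb. lra.
      rewrite RInt_const. rewrite /scal /= /mult /=. lra. }
    have HS := HLS u (z N) ucont (zcont N) t ltac:(lra).
    have Hl := sol_lip' _ _ _ _ _ _ (PhiS u t) (PhiS (z N) t).
    rewrite minus_eq_zero norm_zero Rplus_0_l -Hz in Hl.
    have H2 := HCb (S N) t ltac:(lra). simpl in H2. fold h in H2.
    have := norm_tri3 (Phi u t) (z (S N) t) (u t).
    have Hm : mA * norm (minus (Phi u t) (z (S N) t)) <= L * (t * (C * h)).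
    { eapply Rle_trans. apply Hl. eapply Rle_trans. apply HS. apply Rmult_le_compat_l; lra. }
    have : norm (minus (Phi u t) (z (S N) t)) <= L * t * C / mA * h.
    { apply (Rmult_le_reg_l mA); auto. have -> : mA * (L * t * C / mA * h) = L * (t * (C * h)) by field; lra. auto. }
    intros.
    have : h * Q < eps.
    { have := Rmult_lt_compat_r Q _ _ HQ HhN. have -> : eps / Q * Q = eps by field; lra. lra. }
    rewrite /Q. rewrite Hz in H0 H. intros. have : 0 <= C * h by nra. nra. }
  exists u. split; [split; [|split]|].
  - auto.
  - intros t It. rewrite -ufix //. apply PhiS.
  - intros t It. rewrite -ufix //. apply PhiS.
  - intros v [Hv [KV NV]] t It.
    have Hb0 : 0 <= t by apply It.
    have Hb : forall s, 0 <= s <= t -> I s by intros; apply (I_sub t); auto.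
    destruct (hist_b t Hb) as [L [HL HLS]].
    set w := fun s => norm (minus (v s) (u s)).
    have wc : contw t w by apply (contw_d I); auto.
    destruct (contw_bounded t w Hb0 wc) as [M [HM HMb]].
    set c := L / mA.
    have Hc : 0 <= c by apply Rlt_le, Rdiv_lt_0_compat.
    have Hit := exp_iter (fun _ => w) t c M Hc HM
      (fun n s Hs => contw_int t w Hb0 wc s Hs) HMb.
    have Hw : forall s, 0 <= s <= t -> w s <= c * RInt w 0 s.
    { intros r Hr. have Ir := Hb r Hr.
      have Sv : Solp (f r) (Sop v r) (v r) by split; [apply KV; auto | exact (NV r Ir)].
      have Su : Solp (f r) (Sop u r) (u r) by rewrite -ufix //; apply PhiS.
      have := sol_lip' _ _ _ _ _ _ Sv Su.
      rewrite minus_eq_zero norm_zero Rplus_0_l.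
      have := HLS v u Hv ucont r Hr.
      intros H1 H2. rewrite /w /c.
      apply (Rmult_le_reg_l mA); auto.
      have -> : mA * (L / mA * RInt (fun s0 : R => norm (minus (v s0) (u s0))) 0 r)
         = L * RInt (fun s0 : R => norm (minus (v s0) (u s0))) 0 r by field; lra.
      lra. }
    apply eq_small. intros eps He.
    set E := M * exp ((2 * c + 1) * t).
    have HE : 0 <= E by have := exp_pos ((2 * c + 1) * t); rewrite /E; nra.
    destruct (pow_half_small (eps / (E + 1))) as [N HN]. by apply Rdiv_lt_0_compat; lra.
    have HhN := HN N (le_n _). have Hh0 := pow_le (/ 2) N ltac:(lra).
    have := Hit (fun n s Hs => Hw s Hs) N t ltac:(lra). fold E. rewrite /w.
    have : E * (/ 2) ^ N <= eps.
    { have := Rmult_le_compat_l E _ _ HE (Rlt_le _ _ HhN).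
      have : E * (eps / (E + 1)) <= eps.
      { have -> : E * (eps / (E + 1)) = eps * (E / (E + 1)) by field; lra.
        have : E / (E + 1) <= 1. { apply (Rmult_le_reg_r (E + 1)). lra. have -> : E / (E + 1) * (E + 1) = E by field; lra. lra. }
        nra. }
      lra. }
    lra.
Qed.

End Time.

End StatA.

End Stat.

End Hilb.


Theorem corollary3p3
  (X : CompleteNormedModule R_AbsRing) (ip : X -> X -> R)
  (T : Rbar) (K : X -> Prop) (A : X -> X) (mA LA : R)
  (f : R -> X) (S : (R -> X) -> (R -> X)) (j : X -> R) :
  is_inner_product ip ->
  Rbar_lt 0 T ->
  closed_convex_cone K ->
  0 < mA -> 0 < LA ->
  (forall u v, ip (minus (A u) (A v)) (minus u v) >= mA * (norm (minus u v))^2) ->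
  (forall u v, norm (minus (A u) (A v)) <= LA * norm (minus u v)) ->
  cont_on (time_interval T) f ->
  (forall u, cont_on (time_interval T) u -> cont_on (time_interval T) (S u)) ->
  history_dependent (time_interval T) S ->
  j_hyp K j ->
  exists u : R -> X,
    (cont_on (time_interval T) u /\ (forall t, time_interval T t -> K (u t)) /\
     forall t, time_interval T t ->
       normal_cone ip (Ct ip K j f t) (plus (A (u t)) (S u t)) (opp (u t))) /\
    (forall v : R -> X,
       (cont_on (time_interval T) v /\ (forall t, time_interval T t -> K (v t)) /\
        forall t, time_interval T t ->
          normal_cone ip (Ct ip K j f t) (plus (A (v t)) (S v t)) (opp (v t))) ->
       forall t, time_interval T t -> v t = u t).
Proof.
  intros Hip HT HK HmA HLA Hmono HAlip Hf HScont Hhist Hj.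
  exact (main_result ip Hip K j HK Hj A mA LA HmA HLA Hmono HAlip T f S Hf HScont Hhist).
Qed.
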